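(* Let $F$ be a graph of diameter $2$, $n=|V(F)|$, $t=\delta(F)$, and let $l>n$ be an integer. Then: (1) $\delta_i=f_{2l}$ for all $i\in\{1,\dots,t\}$; (2) $\delta_i=\delta_l$ for all $i\in\{t+1,\dots,l\}$; (3) $\delta_i=0$ for all $i\in\{l+t,l+t+1,\dots,2l-1\}$.
   Context: All graphs are simple, finite, undirected. The $F$-degree of a vertex $v$ in $G$ is the number of subgraphs of $G$ (not necessarily induced) isomorphic to $F$ and containing $v$. $A_{2l-1}$ is the graph with vertex set $\{1,\dots,2l-1\}$ in which distinct $i,j$ are adjacent iff $|i-j|\le l-1$; $F_{2l}$ is obtained from $A_{2l-1}$ by adding a new vertex $2l$ joined exactly to $1,\dots,t$. $z_i$ is the $F$-degree of $i$ in $A_{2l-1}$, $f_i$ is the $F$-degree of $i$ in $F_{2l}$, and $\delta_i=f_i-z_i$ for $i\in\{1,\dots,2l-1\}$. *)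

(* Defs.v *)
From mathcomp Require Import all_boot all_order all_algebra.
Set Implicit Arguments. Unset Strict Implicit. Unset Printing Implicit Defensive.

(* A simple graph on a finite type V is a symmetric irreflexive relation. *)

(* (S, E) is a (not necessarily induced) subgraph of G: every edge of E is a
   2-element subset of S whose two vertices are adjacent in G. *)
Definition is_subgraph (V : finType) (G : rel V)
  (p : {set V} * {set {set V}}) : bool :=
  [forall e in p.2, [&& #|e| == 2, e \subset p.1 &
     [forall x in e, forall y in e, (x != y) ==> G x y]]].

Definition iso_to (n : nat) (F : rel 'I_n) (V : finType)
  (p : {set V} * {set {set V}}) : bool :=
  [exists f : {ffun 'I_n -> V},
     [&& injectiveb f, p.1 == f @: setT &
         [forall x, forall y, F x y == ([set f x; f y] \in p.2)]]].

Definition Fdeg (n : nat) (F : rel 'I_n) (V : finType) (G : rel V) (v : V) : nat :=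
  #|[set p : {set V} * {set {set V}} |
       [&& is_subgraph G p, iso_to F p & v \in p.1]]|.

Definition mindeg (n : nat) (F : rel 'I_n) : nat :=
  \big[minn/n]_(x : 'I_n) #|[set y | F x y]|.

Definition diam2 (n : nat) (F : rel 'I_n) : Prop :=
  (forall x y : 'I_n, x != y -> F x y \/ exists z, F x z /\ F z y) /\
  (exists x y : 'I_n, x != y /\ ~~ F x y).

(* Vertex labelled i (1-based, as in the paper) is the ordinal i-1. *)

Definition Agraph (l : nat) : rel 'I_(2 * l - 1) :=
  fun x y => (x != y) && (x - y <= l - 1) && (y - x <= l - 1).

(* F_{2l}: A_{2l-1} plus vertex 2l (ordinal 2l-1) joined exactly to 1..t
   (ordinals 0..t-1). *)
Definition Fgraph (l t : nat) : rel 'I_(2 * l) :=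
  fun x y =>
    (x != y) &&
    [|| [&& (x < 2 * l - 1)%N, (y < 2 * l - 1)%N, x - y <= l - 1 & y - x <= l - 1],
        (x == 2 * l - 1 :> nat) && (y < t)%N
      | (y == 2 * l - 1 :> nat) && (x < t)%N].

(* F-degree of the vertex with 1-based label i in a graph on 'I_m (0 if absent). *)
Definition Fdeg_lab (n : nat) (F : rel 'I_n) (m : nat) (G : rel 'I_m) (i : nat) : nat :=
  match @insub nat (fun k => k < m)%N _ i.-1 with
  | Some v => Fdeg F G v
  | None => 0
  end.

Definition zdeg (n : nat) (F : rel 'I_n) (l i : nat) : nat :=
  Fdeg_lab F (@Agraph l) i.
Definition fdeg (n : nat) (F : rel 'I_n) (l t i : nat) : nat :=
  Fdeg_lab F (@Fgraph l t) i.
Definition delta (n : nat) (F : rel 'I_n) (l t i : nat) : int :=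
  ((fdeg F l t i)%:Z - (zdeg F l i)%:Z)%R.

(* Main.v *)
Require Import Defs.
From mathcomp Require Import all_boot all_order all_algebra.
From mathcomp Require Import zify.
Set Implicit Arguments. Unset Strict Implicit. Unset Printing Implicit Defensive.

Definition Tr (V W : finType) (g : V -> W) (p : {set V} * {set {set V}}) :
  {set W} * {set {set W}} := (g @: p.1, (fun e : {set V} => g @: e) @: p.2).

Lemma imset_inj_in (V W : finType) (g : V -> W) (D s e : {set V}) :
  {in D &, injective g} -> s \subset D -> e \subset D -> g @: s = g @: e -> s = e.
Proof.
move=> gi sD eD E; apply/setP=> x; apply/idP/idP => xin.
- have: g x \in g @: e by rewrite -E imset_f.
  case/imsetP=> y ye gxy.
  by rewrite (gi x y (subsetP sD x xin) (subsetP eD y ye) gxy).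
- have: g x \in g @: s by rewrite E imset_f.
  case/imsetP=> y ye gxy.
  by rewrite (gi x y (subsetP eD x xin) (subsetP sD y ye) gxy).
Qed.

Lemma subgraph_edge (V : finType) (G : rel V) (p : {set V} * {set {set V}}) e : is_subgraph G p -> e \in p.2 ->
  [&& #|e| == 2, e \subset p.1 & [forall x in e, forall y in e, (x != y) ==> G x y]].
Proof. by move/forall_inP => /(_ e). Qed.

Lemma T_ok n (F : rel 'I_n) (V W : finType) (G : rel V) (H : rel W) (g : V -> W) (p : {set V} * {set {set V}}) :
  {in p.1 &, injective g} -> {in p.1 &, forall x y, G x y -> H (g x) (g y)} ->
  is_subgraph G p -> iso_to F p -> is_subgraph H (Tr g p) && iso_to F (Tr g p).
Proof.
move=> gi gH sg /existsP[f /and3P[/injectiveP fi /eqP p1 /forallP fe]].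
have fin x : f x \in p.1 by rewrite p1 imset_f.
apply/andP; split.
- apply/forall_inP => e' /imsetP[e ep ->].
  case/and3P: (subgraph_edge sg ep) => /eqP c2 eS /forall_inP ad.
  have gie : {in e &, injective g}.
    by move=> x y xe ye; apply: gi; apply: (subsetP eS).
  rewrite card_in_imset // c2 eqxx /= imsetS //=.
  apply/forall_inP => _ /imsetP[x xe ->]; apply/forall_inP => _ /imsetP[y ye ->].
  apply/implyP => nxy. have xy : x != y by apply: contraNneq nxy => ->.
  apply: gH; try apply: (subsetP eS) => //.
  exact: (implyP ((forall_inP (ad x xe)) y ye) xy).
- apply/existsP; exists [ffun x => g (f x)].
  apply/and3P; split.
  + apply/injectiveP => x y; rewrite !ffunE => E; apply: fi.
    exact: gi (fin x) (fin y) E.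
  + rewrite /Tr /= p1 -imset_comp; apply/eqP/eq_imset => x; by rewrite /= ffunE.
  + apply/forallP => x; apply/forallP => y; rewrite !ffunE /=.
    have := forallP (fe x) y => /eqP ->.
    have -> : [set g (f x); g (f y)] = g @: [set f x; f y] by rewrite imsetU1 imset_set1.
    apply/eqP; apply/idP/idP.
    * by move=> h; apply/imsetP; exists [set f x; f y].
    * case/imsetP => e ep E.
      case/and3P: (subgraph_edge sg ep) => _ eS _.
      have sS : [set f x; f y] \subset p.1.
        by apply/subsetP => z; rewrite !inE => /orP[]/eqP->.
      by rewrite (imset_inj_in gi sS eS E).
Qed.

Lemma T_cancel (V W : finType) (G : rel V) (g : V -> W) (r : W -> V) (p : {set V} * {set {set V}}) :
  {in p.1, cancel g r} -> is_subgraph G p -> Tr r (Tr g p) = p.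
Proof.
case: p => [S E] c sg; rewrite /Tr /=; congr pair.
- rewrite -imset_comp -[RHS]imset_id; apply: eq_in_imset => x xS /=; exact: c.
- rewrite -imset_comp -[RHS]imset_id; apply: eq_in_imset => e eE /=.
  case/and3P: (subgraph_edge sg eE) => _ eS _.
  rewrite -imset_comp -[RHS]imset_id; apply: eq_in_imset => x xe /=.
  exact: c (subsetP eS x xe).
Qed.

Lemma card_bij (T1 T2 : finType) (A : {set T1}) (B : {set T2}) (f : T1 -> T2) (g : T2 -> T1) :
 {in A, forall x, f x \in B} -> {in B, forall y, g y \in A} ->
 {in A, cancel f g} -> {in B, cancel g f} -> #|A| = #|B|.
Proof.
move=> fA gB fg gf; rewrite -(card_in_imset (can_in_inj fg)); apply: eq_card => y; apply/imsetP/idP => [[x xA ->]|yB]; first exact: fA.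
by exists (g y); [exact: gB | rewrite gf].
Qed.

Definition cp n (F : rel 'I_n) (V : finType) (G : rel V) (P : pred {set V}) :=
  [set p | [&& is_subgraph G p, iso_to F p & P p.1]].

Lemma cp_bij n (F : rel 'I_n) (V W : finType) (G : rel V) (H : rel W)
  (P : pred {set V}) (Q : pred {set W}) (g : V -> W) (r : W -> V) :
 (forall p, is_subgraph G p -> iso_to F p -> P p.1 ->
   [/\ {in p.1 &, injective g}, {in p.1 &, forall x y, G x y -> H (g x) (g y)},
       {in p.1, cancel g r} & Q (g @: p.1)]) ->
 (forall p, is_subgraph H p -> iso_to F p -> Q p.1 ->
   [/\ {in p.1 &, injective r}, {in p.1 &, forall x y, H x y -> G (r x) (r y)},
       {in p.1, cancel r g} & P (r @: p.1)]) ->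
 #|cp F G P| = #|cp F H Q|.
Proof.
move=> hg hr; apply: (card_bij (f := Tr g) (g := Tr r)).
- move=> p; rewrite !inE => /and3P[s i Pp]; case: (hg p s i Pp) => a b _ d.
  case/andP: (T_ok a b s i) => -> -> /=; exact: d.
- move=> p; rewrite !inE => /and3P[s i Pp]; case: (hr p s i Pp) => a b _ d.
  case/andP: (T_ok a b s i) => -> -> /=; exact: d.
- move=> p; rewrite !inE => /and3P[s i Pp]; case: (hg p s i Pp) => _ _ c _.
  exact: T_cancel c s.
- move=> p; rewrite !inE => /and3P[s i Pp]; case: (hr p s i Pp) => _ _ c _.
  exact: T_cancel c s.
Qed.

Lemma copy_edge n (F : rel 'I_n) (V : finType) (G : rel V) (p : {set V} * {set {set V}})
  (f : {ffun 'I_n -> V}) :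
  irreflexive F -> is_subgraph G p -> injective f ->
  (forall x, [forall y, F x y == ([set f x; f y] \in p.2)]) ->
  forall x y, F x y -> G (f x) (f y).
Proof.
move=> irr sg fi fe x y Fxy; have := forallP (fe x) y; rewrite Fxy eq_sym => /eqP ep.
case/and3P: (subgraph_edge sg ep) => _ _ /forall_inP ad.
have xy : x != y by apply: contraTneq Fxy => ->; rewrite irr.
have fxy : f x != f y by apply: contra xy => /eqP/fi ->.
have := forall_inP (ad (f x) (setU11 _ _)) (f y).
by rewrite !inE eqxx orbT => /(_ isT) /implyP; apply.
Qed.

Lemma copy_dist n (F : rel 'I_n) (V : finType) (G : rel V) (p : {set V} * {set {set V}}) :
  irreflexive F -> (forall x y : 'I_n, x != y -> F x y \/ exists z, F x z /\ F z y) ->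
  is_subgraph G p -> iso_to F p -> forall a b, a \in p.1 -> b \in p.1 -> a != b ->
  G a b \/ exists c, G a c /\ G c b.
Proof.
move=> irr dF sg /existsP[f /and3P[/injectiveP fi /eqP p1 /forallP fe]].
have edge := copy_edge irr sg fi fe.
move=> a b; rewrite p1 => /imsetP[x _ ->] /imsetP[y _ ->] fxy.
have xy : x != y by apply: contra fxy => /eqP ->.
case: (dF x y xy) => [Fxy|[z [h1 h2]]]; first by left; apply: edge.
by right; exists (f z); split; apply: edge.
Qed.
Definition fgn (l t x y : nat) : bool :=
  (x != y) &&
    [|| [&& (x < 2 * l - 1)%N, (y < 2 * l - 1)%N, x - y <= l - 1 & y - x <= l - 1],
        (x == 2 * l - 1) && (y < t)%N
      | (y == 2 * l - 1) && (x < t)%N].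
Lemma fgnC l t x y : fgn l t x y = fgn l t y x.
Proof.
wlog suff: x y / fgn l t x y -> fgn l t y x.
  by move=> h; apply/idP/idP; apply: h.
case/andP=> ne h; rewrite /fgn eq_sym ne /=.
by case/or3P: h => h; apply/or3P; [apply: Or31 | apply: Or33 | apply: Or32]; lia.
Qed.
Lemma fgn_a l t a x : t <= a < l -> t < l ->
  (x == 2 * l - 1) || (x < l+t-1) -> fgn l t a x = (a != x) && (x != 2 * l - 1).
Proof. move=> ha tl hx; rewrite /fgn. case: (a =P x) => //= ax.
case: (x =P 2 * l - 1) => [->|xW] /=.
- apply/negP; lia.
- apply/idP; lia. Qed.
Definition nsw (a c x : nat) := if x == a then c else if x == c then a else x.

Lemma twin l t a c x y : t <= a < l -> t <= c < l -> t < l -> 0 < t ->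
  (x == 2 * l - 1) || (x < l+t-1) -> (y == 2 * l - 1) || (y < l+t-1) ->
  fgn l t (nsw a c x) (nsw a c y) = fgn l t x y.
Proof.
move=> ha hc tl t1 hx hy.
have Ra : (a == 2 * l - 1) || (a < l+t-1) by lia.
have Rc : (c == 2 * l - 1) || (c < l+t-1) by lia.
have Rn z : (z == 2 * l - 1) || (z < l+t-1) -> (nsw a c z == 2 * l - 1) || (nsw a c z < l+t-1).
  by move=> hz; rewrite /nsw; case: ifP => _; last case: ifP => _.
have Ry := Rn y hy.
have nswa : nsw a c a = c by rewrite /nsw eqxx.
have nswc : nsw a c c = a by rewrite /nsw eqxx; case: eqP.
have nswo z : z <> a -> z <> c -> nsw a c z = z.
  by rewrite /nsw => /eqP/negbTE -> /eqP/negbTE ->.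
case: (x =P a) => [->|xa]; [|case: (x =P c) => [->|xc]].
- rewrite nswa (fgn_a hc tl Ry) (fgn_a ha tl hy).
  case: (y =P a) => [->|ya]; [|case: (y =P c) => [->|yc]];
    rewrite ?nswa ?nswc ?nswo //; apply/idP/idP; lia.
- rewrite nswc (fgn_a ha tl Ry) (fgn_a hc tl hy).
  case: (y =P a) => [->|ya]; [|case: (y =P c) => [->|yc]];
    rewrite ?nswa ?nswc ?nswo //; apply/idP/idP; lia.
- rewrite (nswo x xa xc).
  case: (y =P a) => [->|ya]; [|case: (y =P c) => [->|yc]]; rewrite ?nswa ?nswc ?nswo //.
  + rewrite fgnC (fgn_a hc tl hx) fgnC (fgn_a ha tl hx); apply/idP/idP; lia.
  + rewrite fgnC (fgn_a ha tl hx) fgnC (fgn_a hc tl hx); apply/idP/idP; lia.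
Qed.

Lemma FgraphE l t (x y : 'I_(2 * l)) : @Fgraph l t x y = fgn l t x y.
Proof. by []. Qed.

Definition osw l (a c x : 'I_(2 * l)) : 'I_(2 * l) :=
  if x == a then c else if x == c then a else x.

Lemma osw_val l (a c x : 'I_(2 * l)) : val (osw a c x) = nsw a c x.
Proof. by rewrite /osw /nsw -!val_eqE; case: ifP => //; case: ifP. Qed.

Lemma oswK l (a c : 'I_(2 * l)) : involutive (osw a c).
Proof.
move=> x; rewrite /osw.
case: (x =P a) => [->|xa]; first by rewrite eqxx; case: eqP.
case: (x =P c) => [->|xc]; first by rewrite eqxx.
by move/eqP/negbTE: xa => ->; move/eqP/negbTE: xc => ->.
Qed.

Lemma region n (F : rel 'I_n) l t (p : {set 'I_(2 * l)} * {set {set 'I_(2 * l)}})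
  (w : 'I_(2 * l)) : val w = 2 * l - 1 -> t < l -> irreflexive F ->
  (forall x y : 'I_n, x != y -> F x y \/ exists z, F x z /\ F z y) ->
  is_subgraph (@Fgraph l t) p -> iso_to F p -> w \in p.1 ->
  forall b, b \in p.1 -> b != w -> b < l + t - 1.
Proof.
move=> wv tl irr dF sg iso win b bin bw.
have bw' : (b : nat) != 2 * l - 1 by rewrite -wv val_eqE.
have := ltn_ord b.
case: (copy_dist irr dF sg iso win bin); first by rewrite eq_sym.
- rewrite FgraphE /fgn wv; lia.
- case=> c []; rewrite !FgraphE /fgn wv; have := ltn_ord c; lia.
Qed.

Lemma deg n (F : rel 'I_n) l t (p : {set 'I_(2 * l)} * {set {set 'I_(2 * l)}})
  (w : 'I_(2 * l)) : val w = 2 * l - 1 ->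
  (forall a, t <= #|[set y | F a y]|) -> t <= 2 * l -> irreflexive F ->
  is_subgraph (@Fgraph l t) p -> iso_to F p -> w \in p.1 ->
  forall v : 'I_(2 * l), v < t -> v \in p.1.
Proof.
move=> wv tdeg tl irr sg /existsP[f /and3P[/injectiveP fi /eqP p1 /forallP fe]] win v vt.
have edge := copy_edge irr sg fi fe.
move: win; rewrite p1 => /imsetP[a _ wa].
set N := [set y | F a y].
have sub : f @: N \subset [set u : 'I_(2 * l) | u < t].
  apply/subsetP => u /imsetP[y Fay ->]; rewrite inE in Fay; rewrite inE.
  have := edge a y Fay; rewrite -wa FgraphE /fgn wv; move: (f y) => z; have := ltn_ord z; lia.
have cardB : #|[set u : 'I_(2 * l) | u < t]| <= t.
  have sW : [set u : 'I_(2 * l) | u < t] \subset [set widen_ord tl i | i : 'I_t].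
    apply/subsetP => u; rewrite inE => ut; apply/imsetP; exists (Ordinal ut) => //.
    exact: val_inj.
  apply: leq_trans (subset_leq_card sW) _.
  by apply: leq_trans (leq_imset_card _ _) _; rewrite card_ord.
have eq : f @: N = [set u : 'I_(2 * l) | u < t].
  apply/eqP; rewrite eqEcard sub /= (card_imset _ fi).
  exact: leq_trans cardB (tdeg a).
have : v \in f @: N by rewrite eq inE.
by case/imsetP => y _ ->; rewrite imset_f.
Qed.

Lemma swap_ok n (F : rel 'I_n) l t (p : {set 'I_(2 * l)} * {set {set 'I_(2 * l)}})
  (w a c : 'I_(2 * l)) : val w = 2 * l - 1 -> t < l -> 0 < t -> irreflexive F ->
  (forall x y : 'I_n, x != y -> F x y \/ exists z, F x z /\ F z y) ->
  t <= a < l -> t <= c < l ->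
  is_subgraph (@Fgraph l t) p -> iso_to F p -> w \in p.1 ->
  [/\ {in p.1 &, injective (osw a c)},
      {in p.1 &, forall x y, @Fgraph l t x y -> @Fgraph l t (osw a c x) (osw a c y)},
      {in p.1, cancel (osw a c) (osw a c)} & osw a c w = w].
Proof.
move=> wv tl t1 irr dF ha hc sg iso win; rewrite /= in wv.
have R x : x \in p.1 -> (x == 2 * l - 1 :> nat) || (x < l + t - 1).
  move=> xi; case: (x =P w) => [->|xw]; first by rewrite wv eqxx.
  by rewrite (region wv tl irr dF sg iso win xi) ?orbT //; apply/eqP.
split.
- by move=> x y _ _ E; rewrite -(oswK a c x) E oswK.
- by move=> x y xi yi; rewrite !FgraphE !osw_val twin // ?R.
- by move=> x _; rewrite oswK.
- apply: val_inj; rewrite osw_val /nsw.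
  have := ltn_ord a; have := ltn_ord c; move: wv; case: eqP; [lia|]; case: eqP; [lia|done].
Qed.

Lemma bigmin_le_gen (I : eqType) (r : seq I) (f : I -> nat) d a :
  a \in r -> \big[minn/d]_(i <- r) f i <= f a.
Proof.
elim: r => [//|x r IH]; rewrite inE big_cons => /orP[/eqP->|/IH h].
- exact: geq_minl.
- exact: leq_trans (geq_minr _ _) h.
Qed.

Lemma mindeg_le n (F : rel 'I_n) a : mindeg F <= #|[set y | F a y]|.
Proof. rewrite /mindeg; apply: bigmin_le_gen; exact: mem_index_enum. Qed.

Lemma mindeg_gt0 n (F : rel 'I_n) : 0 < n -> (forall a, 0 < #|[set y | F a y]|) -> 0 < mindeg F.
Proof.
move=> n0 h; rewrite /mindeg; apply: (big_ind (fun m => 0 < m)) => //.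
by move=> x y; rewrite leq_min => -> ->.
Qed.

Unset Implicit Arguments.
Theorem lemma5 (n : nat) (F : rel 'I_n) (l : nat) :
  symmetric F -> irreflexive F -> diam2 F -> (n < l)%N ->
  let t := mindeg F in
  (forall i : nat, (1 <= i <= t)%N -> delta F l t i = Posz (fdeg F l t (2 * l))) /\
  (forall i : nat, (t.+1 <= i <= l)%N -> delta F l t i = delta F l t l) /\
  (forall i : nat, (l + t <= i <= 2 * l - 1)%N -> delta F l t i = 0%R).
Proof.
move=> symF irrF [dF [x0 [y0 [nxy _]]]] nl t.
have tdeg a : t <= #|[set y | F a y]| by apply: mindeg_le.
have tl : t < l.
  apply: leq_ltn_trans (tdeg x0) _; apply: leq_ltn_trans nl.
  by rewrite -[X in _ <= X]card_ord; apply: max_card.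
have t1 : 0 < t.
  apply: mindeg_gt0; first by have := ltn_ord x0; lia.
  move=> a; apply/card_gt0P.
  have [b ab] : exists b, a != b.
    case: (a =P x0) => [->|ax]; first by exists y0.
    by exists x0; apply/eqP.
  case: (dF a b ab) => [Fab|[z [Faz _]]]; [exists b | exists z]; by rewrite inE.
have wl : 2 * l - 1 < 2 * l by lia.
pose w : 'I_(2 * l) := Ordinal wl.
pose D (v : 'I_(2 * l)) := #|cp F (@Fgraph l t) (fun S => (v \in S) && (w \in S))|.
have key i (v : 'I_(2 * l)) : 1 <= i <= 2 * l - 1 -> val v = i.-1 ->
    delta F l t i = Posz (D v).
  move=> hi vi.
  have iu : i.-1 < 2 * l - 1 by lia.
  pose u : 'I_(2 * l - 1) := Ordinal iu.
  have iw : i.-1 < 2 * l by lia.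
  have fE : fdeg F l t i = Fdeg F (@Fgraph l t) v.
    rewrite /fdeg /Fdeg_lab (insubT (fun k => k < 2 * l) iw) /=; congr Fdeg; exact: val_inj.
  have zE : zdeg F l i = Fdeg F (@Agraph l) u.
    by rewrite /zdeg /Fdeg_lab (insubT (fun k => k < 2 * l - 1) iu) /=.
  have spl : Fdeg F (@Fgraph l t) v =
      D v + #|cp F (@Fgraph l t) (fun S => (v \in S) && (w \notin S))|.
    rewrite /Fdeg -(cardsID [set p : {set 'I_(2 * l)} * {set {set 'I_(2 * l)}} | w \in p.1]).
    congr (_ + _); apply: eq_card => p; rewrite !inE;
      by case: (w \in p.1); case: (v \in p.1); rewrite ?andbT ?andbF.
  have le1 : 2 * l - 1 <= 2 * l by lia.
  have emb : Fdeg F (@Agraph l) u =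
      #|cp F (@Fgraph l t) (fun S => (v \in S) && (w \notin S))|.
    change (#|cp F (@Agraph l) (fun S => u \in S)| = #|cp F (@Fgraph l t) (fun S => (v \in S) && (w \notin S))|).
    apply: (cp_bij (g := widen_ord le1) (r := fun x => insubd u (val x))).
    - move=> p sg io uin; split.
      + by move=> x y _ _ /(congr1 val) /= /val_inj.
      + move=> x y _ _; rewrite /Agraph FgraphE /fgn /= -!val_eqE /=.
        have := ltn_ord x; have := ltn_ord y; lia.
      + by move=> x _; apply: val_inj; rewrite /= insubdK //; exact: (ltn_ord x).
      + apply/andP; split.
        * by apply/imsetP; exists u => //; apply: val_inj; rewrite /= vi.
        * apply/imsetP => -[x _ /(congr1 val) /=]; have := ltn_ord x; lia.
    - move=> p sg io /andP[vin wnin].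
      have pin x : x \in p.1 -> x < 2 * l - 1.
        move=> xin; have : x != w by apply: contraNneq wnin => <-.
        rewrite -val_eqE /=; have := ltn_ord x; lia.
      split.
      + move=> x y xi yi /(congr1 val) /=; rewrite !insubdK; try by apply: pin.
        exact: val_inj.
      + move=> x y xi yi; rewrite /Agraph FgraphE /fgn /= -!val_eqE /= !insubdK;
          try by apply: pin.
        have := pin x xi; have := pin y yi; lia.
      + by move=> x xi; apply: val_inj; rewrite /= insubdK //; apply: pin.
      + apply/imsetP; exists v => //; apply: val_inj; rewrite /= insubdK //; exact: pin vin.
  by rewrite /delta fE zE spl emb PoszD GRing.addrK.
split; [|split].
- move=> i hi.
  have vi : i.-1 < 2 * l by lia.
  rewrite (key i (Ordinal vi)) //; last by lia.
  congr Posz.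
  have w2 : (2 * l).-1 < 2 * l by lia.
  rewrite /fdeg /Fdeg_lab (insubT (fun k => k < 2 * l) w2) /= /D /Fdeg.
  have -> : Sub (2 * l).-1 w2 = w by apply: val_inj => /=; lia.
  apply: eq_card => p; rewrite !inE.
  apply/idP/idP => /and3P[s io h]; rewrite s io /=; first by case/andP: h.
  rewrite h andbT; apply: (deg (w := w) _ tdeg _ irrF s io h) => //=; lia.
- move=> i hi.
  have vi : i.-1 < 2 * l by lia.
  have vl : l.-1 < 2 * l by lia.
  rewrite (key i (Ordinal vi)) //; last by lia.
  rewrite (key l (Ordinal vl)) //; last by lia.
  congr Posz; rewrite /D.
  set a := Ordinal vi; set c := Ordinal vl.
  have ha : t <= a < l by rewrite /=; lia.
  have hc : t <= c < l by rewrite /=; lia.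
  have wv : val w = 2 * l - 1 by [].
  have sac : osw a c a = c by rewrite /osw eqxx.
  have sca : osw a c c = a by rewrite /osw eqxx; case: eqP.
  apply: (cp_bij (g := osw a c) (r := osw a c)).
  + move=> p sg io /andP[ain win].
    case: (swap_ok wv tl t1 irrF dF ha hc sg io win) => i1 i2 i3 i4; split => //.
    by apply/andP; split; apply/imsetP; [exists a | exists w].
  + move=> p sg io /andP[cin win].
    case: (swap_ok wv tl t1 irrF dF ha hc sg io win) => i1 i2 i3 i4; split => //.
    by apply/andP; split; apply/imsetP; [exists c | exists w].
- move=> i hi.
  have vi : i.-1 < 2 * l by lia.
  rewrite (key i (Ordinal vi)) //; last by lia.
  suff -> : D (Ordinal vi) = 0 by [].
  apply/eqP; rewrite cards_eq0; apply/eqP/setP => p; rewrite !inE.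
  apply/negP => /and3P[s io /andP[vin win]].
  have vw : Ordinal vi != w by rewrite -val_eqE /=; lia.
  have := region (w := w) (erefl _) tl irrF dF s io win vin vw.
  rewrite /=; lia.
Qed.
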